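(* Consider the sequences generated by Algorithm PS under (A1)–(A7), let $p^k:=(z^k,w_1^k,\dots,w_{n-1}^k)$, and for each $k\ge0$ define the function $\varphi_k:\boldsymbol{\mathcal H}\to\mathbb R$ by $$\varphi_k(z,w_1,\dots,w_{n-1}):=\langle z,v^k\rangle+\sum_{i=1}^{n-1}\langle w_i,u_i^k\rangle-\sum_{i=1}^n\Big[\langle x_i^k,y_i^k\rangle+\tfrac1{4\beta_i}\|x_i^k-G_iz^k\|^2\Big]$$ (so the scalar $\varphi_k$ of the algorithm equals $\varphi_k(p^k)$). Then for all $k\ge0$: (a) $\varphi_k$ is affine, its gradient with respect to $\langle\cdot,\cdot\rangle_\gamma$ is $\nabla\varphi_k=(\gamma^{-1}v^k,u_1^k,\dots,u_{n-1}^k)$, and $\|\nabla\varphi_k\|_\gamma^2=\pi_k$; (b) for all $p=(z,w_1,\dots,w_{n-1})\in\boldsymbol{\mathcal H}$, with $w_n:=-\sum_{i=1}^{n-1}G_i^*w_i$, $$\varphi_k(p)=\sum_{i=1}^n\Big[\langle G_iz-x_i^k,\,y_i^k-w_i\rangle-\tfrac1{4\beta_i}\|x_i^k-G_iz^k\|^2\Big];$$ (c) $\mathcal S\subset\{p\in\boldsymbol{\mathcal H}:\varphi_k(p)\le0\}$; (d) $p^{k+1}=p^k-\tau_k\frac{\varphi_k(p^k)}{\|\nabla\varphi_k\|_\gamma^2}\nabla\varphi_k$ if $\varphi_k(p^k)>0$, and $p^{k+1}=p^k$ otherwise; (e) the sequences $(z^k)$ and $(w_i^k)$, $i=1,\dots,n$,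 are bounded.
   Context: Standing setting. Let $\mathcal H_0,\dots,\mathcal H_{n-1}$ be real Hilbert spaces ($n\ge2$) and $\mathcal H_n:=\mathcal H_0$. Conventions: $0\cdot\infty=0$, $r\cdot\infty=\infty$ for $r>0$, $1/\infty=0$, $1/0=\infty$. For each $i=1,\dots,n$: (A1) $G_i:\mathcal H_0\to\mathcal H_i$ is bounded linear and $G_n=I$; (A2) $A_i:\mathcal H_i\rightrightarrows\mathcal H_i$ is maximal monotone; (A3) $B_i:\mathcal H_i\to\mathcal H_i$ is monotone and $\ell_i$-Lipschitz, $\ell_i\in[0,\infty)$; (A4) $C_i:\mathcal H_i\to\mathcal H_i$ is $\beta_i$-cocoercive with $\beta_i\in(0,\infty]$, i.e. $\langle x-y,C_ix-C_iy\rangle\ge\beta_i\|C_ix-C_iy\|^2$ for all $x,y$ (so $\beta_i=\infty$ means $C_i$ is constant, and then $1/(4\beta_i)=0$); (A5) $D_i:\mathcal H_i\to\mathcal H_i$ is monotone and continuously differentiable with $\|D_i'(x)-D_i'(y)\|\le m_i\|x-y\|$ for all $x,y$, $m_i\in[0,\infty)$; (A6) with $T_i:=A_i+B_i+C_i+D_i$, the inclusion $0\in\sum_{i=1}^nG_i^*T_i(G_iz)$ has at least one solution $z\in\mathcal H_0$; (A7) there is $\mathcal I_D\subset\{1,\dots,n\}$ with $m_i>0$ for $i\in\mathcal I_D$ and $m_i=0$, $D_i=0$ for $i\notin\mathcal I_D$. Notation: $D_{i,(u)}(x):=D_i(u)+D_i'(u)(x-u)$; for a maximal monotone $S$, $J_S:=(S+I)^{-1}$.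 $\boldsymbol{\mathcal H}:=\mathcal H_0\times\mathcal H_1\times\cdots\times\mathcal H_{n-1}$ with inner product $\langle p,\tilde p\rangle_\gamma:=\gamma\langle z,\tilde z\rangle+\sum_{i=1}^{n-1}\langle w_i,\tilde w_i\rangle$ for $p=(z,w_1,\dots,w_{n-1})$, $\tilde p=(\tilde z,\tilde w_1,\dots,\tilde w_{n-1})$, and norm $\|\cdot\|_\gamma$; for such $p$ one writes $w_n:=-\sum_{i=1}^{n-1}G_i^*w_i$. The extended solution set is $\mathcal S:=\{p\in\boldsymbol{\mathcal H}: w_i\in T_i(G_iz),\ i=1,\dots,n\}$ (with $w_n$ as just defined). Algorithm PS. Input: $(z^0,w_1^0,\dots,w_{n-1}^0)\in\boldsymbol{\mathcal H}$, $0<\underline\tau<\overline\tau<2$, $0<\underline\theta<\overline\theta<2$, $\hat\rho>0$, $\hat\delta>0$, $\gamma>0$; $w_n^0:=-\sum_{i=1}^{n-1}G_i^*w_i^0$. For $k=0,1,2,\dots$: for each $i=1,\dots,n$ define $(\rho_i^k,x_i^k,y_i^k)$ as follows. (i) If $w_i^k\in T_i(G_iz^k)$: $\rho_i^k=\hat\rho$, $x_i^k=G_iz^k$, $y_i^k=w_i^k$. (ii) Otherwise, if $i\in\mathcal I_D$: $\rho_i^k>0$ and $x_i^k=J_{\rho_i^k(A_i+D_{i,(G_iz^k)})}\big(G_iz^k+\rho_i^kw_i^k-\rho_i^k(B_i+C_i)(G_iz^k)\big)$ satisfy $\underline\theta\le4\ell_i^2(\rho_i^k)^2+(\beta_i^{-1}+\hat\delta)\rho_i^k+(m_i\rho_i^k\|x_i^k-G_iz^k\|)^2\le\overline\theta$,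 and $y_i^k=\frac{G_iz^k-x_i^k}{\rho_i^k}+w_i^k+[B_i(x_i^k)-B_i(G_iz^k)]+[D_i(x_i^k)-D_{i,(G_iz^k)}(x_i^k)]$. (iii) Otherwise ($i\notin\mathcal I_D$): some $\rho_i^k>0$ is chosen, $x_i^k=J_{\rho_i^kA_i}\big(G_iz^k+\rho_i^kw_i^k-\rho_i^k(B_i+C_i)(G_iz^k)\big)$ and $y_i^k=\frac{G_iz^k-x_i^k}{\rho_i^k}+w_i^k+[B_i(x_i^k)-B_i(G_iz^k)]$. Then set $u_i^k=x_i^k-G_ix_n^k$ ($i=1,\dots,n-1$), $v^k=\sum_{i=1}^nG_i^*y_i^k$, $\varphi_k=\langle z^k,v^k\rangle+\sum_{i=1}^{n-1}\langle w_i^k,u_i^k\rangle-\sum_{i=1}^n\big[\langle x_i^k,y_i^k\rangle+\frac1{4\beta_i}\|x_i^k-G_iz^k\|^2\big]$, $\pi_k=\gamma^{-1}\|v^k\|^2+\sum_{i=1}^{n-1}\|u_i^k\|^2$. If $\varphi_k>0$: choose $\tau_k\in[\underline\tau,\overline\tau]$, $\alpha_k=\tau_k\varphi_k/\pi_k$, $z^{k+1}=z^k-\gamma^{-1}\alpha_kv^k$, $w_i^{k+1}=w_i^k-\alpha_ku_i^k$ ($i=1,\dots,n-1$); otherwise $z^{k+1}=z^k$, $w_i^{k+1}=w_i^k$. Finally $w_n^{k+1}=-\sum_{i=1}^{n-1}G_i^*w_i^{k+1}$. *)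

(* Defs.v *)
From HB Require Import structures.
From mathcomp Require Import all_boot all_order all_algebra.
From mathcomp Require Import boolp classical_sets reals constructive_ereal.

Set Implicit Arguments.
Unset Strict Implicit.
Unset Printing Implicit Defensive.

Import Order.TTheory GRing.Theory Num.Theory.
Local Open Scope ring_scope.

HB.mixin Record Lmodule_isInner (R : realType) V of GRing.Lmodule R V := {
  inner : V -> V -> R;
  innerC : forall x y : V, inner x y = inner y x;
  innerDl : forall x y z : V, inner (x + y) z = inner x z + inner y z;
  innerZl : forall (a : R) (x y : V), inner (a *: x) y = a * inner x y;
  inner_ge0 : forall x : V, 0 <= inner x x;
  inner_eq0 : forall x : V, inner x x = 0 -> x = 0
}.

#[short(type="preHilbertType")]
HB.structure Definition PreHilbert (R : realType) :=
  {V of Lmodule_isInner R V & GRing.Lmodule R V}.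

Definition hnorm (R : realType) (V : preHilbertType R) (x : V) : R :=
  Num.sqrt (inner x x).

Definition hcauchy (R : realType) (V : preHilbertType R) (u : nat -> V) :=
  forall e : R, 0 < e -> exists N : nat, forall p q : nat,
    (N <= p)%N -> (N <= q)%N -> hnorm (u p - u q) < e.

Definition hconverges (R : realType) (V : preHilbertType R) (u : nat -> V)
  (l : V) :=
  forall e : R, 0 < e -> exists N : nat, forall p : nat,
    (N <= p)%N -> hnorm (u p - l) < e.

HB.mixin Record PreHilbert_isComplete (R : realType) V of PreHilbert R V := {
  hcomplete : forall u : nat -> V, hcauchy u -> exists l : V, hconverges u l
}.

#[short(type="hilbertType")]
HB.structure Definition Hilbert (R : realType) :=
  {V of PreHilbert_isComplete R V & PreHilbert R V}.

Section Operators.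
Variables (R : realType) (E : hilbertType R).

(* set-valued operator A : E ⇉ E ; v ∈ A x is written  A x v *)
Definition monotone_op (A : E -> set E) : Prop :=
  forall x y u v, A x u -> A y v -> 0 <= inner (x - y) (u - v).

Definition maximal_monotone (A : E -> set E) : Prop :=
  monotone_op A /\
  forall x u, (forall y v, A y v -> 0 <= inner (x - y) (u - v)) -> A x u.

Definition monotone_fun (B : E -> E) : Prop :=
  forall x y, 0 <= inner (x - y) (B x - B y).

Definition lipschitz_with (l : R) (B : E -> E) : Prop :=
  forall x y, hnorm (B x - B y) <= l * hnorm (x - y).

(* beta-cocoercive with beta in (0, +oo]; beta = +oo means C is constant *)
Definition cocoercive (beta : \bar R) (C : E -> E) : Prop :=
  match beta with
  | r%:E => forall x y, r * hnorm (C x - C y) ^+ 2 <= inner (x - y) (C x - C y)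
  | +oo%E => forall x y, C x = C y
  | -oo%E => False
  end.

Definition is_linear (F : hilbertType R) (L : E -> F) : Prop :=
  forall (a : R) (x y : E), L (a *: x + y) = a *: L x + L y.

Definition is_bounded_linear (F : hilbertType R) (L : E -> F) : Prop :=
  is_linear L /\ exists c : R, forall x, hnorm (L x) <= c * hnorm x.

Definition is_adjoint (F : hilbertType R) (L : E -> F) (Ls : F -> E) : Prop :=
  forall x y, inner (L x) y = inner x (Ls y).

Definition frechet_derivative (D : E -> E) (D' : E -> E -> E) : Prop :=
  forall x, is_bounded_linear (D' x) /\
    forall e : R, 0 < e -> exists d : R, 0 < d /\ forall h : E,
      hnorm h < d -> hnorm (D (x + h) - D x - D' x h) <= e * hnorm h.

Definition derivative_continuous (D' : E -> E -> E) : Prop :=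
  forall x (e : R), 0 < e -> exists d : R, 0 < d /\ forall y,
    hnorm (y - x) < d -> forall h, hnorm (D' y h - D' x h) <= e * hnorm h.

Definition derivative_lipschitz (m : R) (D' : E -> E -> E) : Prop :=
  forall x y h, hnorm (D' x h - D' y h) <= m * hnorm (x - y) * hnorm h.

(* data attached to one index i : A_i, B_i, C_i, D_i, D_i', l_i, beta_i, m_i,
   and the boolean (i \in I_D) *)
Record opdata := OpData {
  oA : E -> set E;
  oB : E -> E;
  oC : E -> E;
  oD : E -> E;
  oD' : E -> E -> E;
  oell : R;
  obeta : \bar R;
  om : R;
  oinD : bool
}.

Definition admissible (d : opdata) : Prop :=
  [/\ maximal_monotone (oA d),
      monotone_fun (oB d) /\ 0 <= oell d /\ lipschitz_with (oell d) (oB d),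
      (0 < obeta d)%E /\ cocoercive (obeta d) (oC d),
      [/\ monotone_fun (oD d), frechet_derivative (oD d) (oD' d),
          derivative_continuous (oD' d), 0 <= om d &
          derivative_lipschitz (om d) (oD' d)] &
      (oinD d -> 0 < om d) /\
      (~~ oinD d -> om d = 0 /\ forall x, oD d x = 0)].

(* w \in T(x) where T = A + B + C + D *)
Definition inT (d : opdata) (x w : E) : Prop :=
  oA d x (w - oB d x - oC d x - oD d x).

Definition Dlin (d : opdata) (u x : E) : E := oD d u + oD' d u (x - u).

(* 1/beta and 1/(4 beta), with 1/(+oo) = 0 *)
Definition inv_beta (beta : \bar R) : R :=
  match beta with r%:E => r^-1 | _ => 0 end.
Definition inv4_beta (beta : \bar R) : R :=
  match beta with r%:E => (4 * r)^-1 | _ => 0 end.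

Definition op_add (A : E -> set E) (L : E -> E) : E -> set E :=
  fun x v => exists a, A x a /\ v = a + L x.

Definition op_scale (rho : R) (S : E -> set E) : E -> set E :=
  fun x v => exists s, S x s /\ v = rho *: s.

(* resolvent_pt S y x  <->  x = J_S(y) = (S + I)^{-1} y, i.e. y \in x + S x
   (J_S is single-valued whenever S is monotone) *)
Definition resolvent_pt (S : E -> set E) (y x : E) : Prop := S x (y - x).

End Operators.

Section Block.
Variables (R : realType) (H0 E : hilbertType R).

Definition ps_block (thl thh rhohat deltahat : R) (G : H0 -> E)
    (d : opdata E) (zk : H0) (wk : E) (rho : R) (x y : E) : Prop :=
  let u := G zk in
  let s := u + rho *: wk - rho *: (oB d u + oC d u) in
  (inT d u wk -> [/\ rho = rhohat, x = u & y = wk]) /\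
  (~ inT d u wk -> oinD d ->
     [/\ 0 < rho,
         resolvent_pt (op_scale rho (op_add (oA d) (Dlin d u))) s x,
         thl <= 4 * oell d ^+ 2 * rho ^+ 2 + (inv_beta (obeta d) + deltahat) * rho
                + (om d * rho * hnorm (x - u)) ^+ 2 <= thh &
         y = rho^-1 *: (u - x) + wk + (oB d x - oB d u) + (oD d x - Dlin d u x)])
  /\
  (~ inT d u wk -> ~~ oinD d ->
     [/\ 0 < rho,
         resolvent_pt (op_scale rho (oA d)) s x &
         y = rho^-1 *: (u - x) + wk + (oB d x - oB d u)]).

End Block.

(* indices i = 1..n-1 are represented by i : 'I_n.-1 (ordinal j <-> i = j+1) *)

Section Product.
Variables (R : realType) (n : nat) (H0 : hilbertType R)
  (Hs : 'I_n.-1 -> hilbertType R).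

Definition prodH : Type := (H0 * (forall i : 'I_n.-1, Hs i))%type.

Definition padd (p q : prodH) : prodH := (p.1 + q.1, fun i => p.2 i + q.2 i).
Definition psub (p q : prodH) : prodH := (p.1 - q.1, fun i => p.2 i - q.2 i).
Definition pscale (t : R) (p : prodH) : prodH := (t *: p.1, fun i => t *: p.2 i).

Definition ipg (gamma : R) (p q : prodH) : R :=
  gamma * inner p.1 q.1 + \sum_(i < n.-1) inner (p.2 i) (q.2 i).
Definition pnorm (gamma : R) (p : prodH) : R := Num.sqrt (ipg gamma p p).

Definition affine_fun (f : prodH -> R) : Prop :=
  forall (t : R) (p q : prodH),
    f (padd (pscale t p) (pscale (1 - t) q)) = t * f p + (1 - t) * f q.

Definition is_gradient (gamma : R) (f : prodH -> R) (g : prodH) : Prop :=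
  forall (p : prodH) (e : R), 0 < e -> exists d : R, 0 < d /\ forall h : prodH,
    pnorm gamma h < d -> `|f (padd p h) - f p - ipg gamma g h| <= e * pnorm gamma h.

Definition wn_of (Gs : forall i, Hs i -> H0) (p : prodH) : H0 :=
  - \sum_(i < n.-1) @Gs i (p.2 i).

Definition extsol (G : forall i, H0 -> Hs i) (Gs : forall i, Hs i -> H0)
    (d : forall i, opdata (Hs i)) (dn : opdata H0) (p : prodH) : Prop :=
  (forall i, inT (d i) (@G i p.1) (p.2 i)) /\ inT dn p.1 (wn_of Gs p).

End Product.

Section Quantities.
Variables (R : realType) (n : nat) (H0 : hilbertType R)
  (Hs : 'I_n.-1 -> hilbertType R)
  (G : forall i, H0 -> Hs i) (Gs : forall i, Hs i -> H0)
  (d : forall i, opdata (Hs i)) (dn : opdata H0)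
  (x y : nat -> forall i, Hs i) (xn yn : nat -> H0) (z : nat -> H0).

Definition ps_u (k : nat) : forall i, Hs i := fun i => x k i - @G i (xn k).
(* v^k = sum_{i=1}^n G_i^* y_i^k  (G_n^* = I) *)
Definition ps_v (k : nat) : H0 := \sum_(i < n.-1) @Gs i (y k i) + yn k.

Definition ps_phi (k : nat) (p : prodH H0 Hs) : R :=
  inner p.1 (ps_v k) + \sum_(i < n.-1) inner (p.2 i) (ps_u k i)
  - ((\sum_(i < n.-1) (inner (x k i) (y k i)
        + inv4_beta (obeta (d i)) * hnorm (x k i - @G i (z k)) ^+ 2))
     + (inner (xn k) (yn k) + inv4_beta (obeta dn) * hnorm (xn k - z k) ^+ 2)).

Definition ps_pi (gamma : R) (k : nat) : R :=
  gamma^-1 * hnorm (ps_v k) ^+ 2 + \sum_(i < n.-1) hnorm (ps_u k i) ^+ 2.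

Definition ps_grad (gamma : R) (k : nat) : prodH H0 Hs :=
  (gamma^-1 *: ps_v k, ps_u k).

End Quantities.

Definition ps_iterates (R : realType) (n : nat) (H0 : hilbertType R)
  (Hs : 'I_n.-1 -> hilbertType R)
  (G : forall i, H0 -> Hs i) (Gs : forall i, Hs i -> H0)
  (d : forall i, opdata (Hs i)) (dn : opdata H0)
  (taul tauh thl thh rhohat deltahat gamma : R)
  (z : nat -> H0) (w : nat -> forall i, Hs i)
  (rho : nat -> 'I_n.-1 -> R) (rhon : nat -> R)
  (x y : nat -> forall i, Hs i) (xn yn : nat -> H0) (tau : nat -> R) : Prop :=
  forall k : nat,
    (forall i, ps_block thl thh rhohat deltahat (G i) (d i) (z k) (w k i)
                 (rho k i) (x k i) (y k i)) /\
    ps_block thl thh rhohat deltahat id dn (z k) (wn_of Gs (z k, w k))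
      (rhon k) (xn k) (yn k) /\
    let phik := ps_phi G Gs d dn x y xn yn z k (z k, w k) in
    let vk := ps_v Gs y yn k in
    let pik := ps_pi G Gs x y xn yn gamma k in
    (0 < phik ->
       let alpha := tau k * phik / pik in
       [/\ taul <= tau k <= tauh,
           z k.+1 = z k - (gamma^-1 * alpha) *: vk &
           forall i, w k.+1 i = w k i - alpha *: ps_u G x xn k i]) /\
    (~ 0 < phik -> z k.+1 = z k /\ forall i, w k.+1 i = w k i).

(* Main.v *)
Require Import Defs.
From HB Require Import structures.
From mathcomp Require Import all_boot all_order all_algebra.
From mathcomp Require Import boolp classical_sets reals constructive_ereal.
From mathcomp Require Import ring lra.
Import Order.TTheory GRing.Theory Num.Theory.
Local Open Scope ring_scope.
Set Implicit Arguments.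
Unset Strict Implicit.

Section InnerLemmas.
Variables (R : realType) (V : preHilbertType R).
Implicit Types (x y z : V) (a t : R).

Lemma innerDr x y z : inner x (y + z) = inner x y + inner x z.
Proof. by rewrite innerC innerDl innerC [inner z x]innerC. Qed.
Lemma innerZr a x y : inner x (a *: y) = a * inner x y.
Proof. by rewrite innerC innerZl innerC. Qed.
Lemma inner0l y : inner (0 : V) y = 0.
Proof. by have := innerZl 0 0 y; rewrite scale0r mul0r. Qed.
Lemma inner0r x : inner x (0 : V) = 0.
Proof. by rewrite innerC inner0l. Qed.
Lemma innerNl x y : inner (- x) y = - inner x y.
Proof. by rewrite -scaleN1r innerZl mulN1r. Qed.
Lemma innerNr x y : inner x (- y) = - inner x y.
Proof. by rewrite -scaleN1r innerZr mulN1r. Qed.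
Lemma innerBl x y z : inner (x - y) z = inner x z - inner y z.
Proof. by rewrite innerDl innerNl. Qed.
Lemma innerBr x y z : inner x (y - z) = inner x y - inner x z.
Proof. by rewrite innerDr innerNr. Qed.
Lemma inner_sumr (I : Type) (r : seq I) (P : pred I) (F : I -> V) x :
  inner x (\sum_(i <- r | P i) F i) = \sum_(i <- r | P i) inner x (F i).
Proof. exact: (big_morph (inner x) (innerDr x) (inner0r x)). Qed.
Lemma hnorm_sq x : hnorm x ^+ 2 = inner x x.
Proof. by rewrite /hnorm sqr_sqrtr // inner_ge0. Qed.
Lemma hnorm_ge0 x : 0 <= hnorm x.
Proof. exact: sqrtr_ge0. Qed.

Lemma inner_sqB x y a :
  inner (x - a *: y) (x - a *: y) = inner x x - 2 * a * inner x y + a ^+ 2 * inner y y.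
Proof.
rewrite !(innerDl, innerDr, innerNl, innerNr, innerZl, innerZr) [inner y x]innerC; ring.
Qed.

Lemma inner_sqD x y : inner (x + y) (x + y) <= 2 * inner x x + 2 * inner y y.
Proof.
have := inner_ge0 (x - y).
rewrite !(innerDl, innerDr, innerNl, innerNr) [inner y x]innerC; lra.
Qed.

Lemma inner_sq_split x y : inner x x <= 2 * inner (x - y) (x - y) + 2 * inner y y.
Proof. by have := inner_sqD (x - y) y; rewrite subrK. Qed.

Lemma hnorm_le x : hnorm x <= 1 + inner x x.
Proof. rewrite -hnorm_sq; have := hnorm_ge0 x; nra. Qed.

Lemma CS x y : inner x y ^+ 2 <= inner x x * inner y y.
Proof.
have [y0|ypos] := eqVneq (inner y y) 0.
  by rewrite (inner_eq0 _ y0) inner0r inner0r expr0n /= mulr0.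
have Ypos : 0 < inner y y by rewrite lt0r ypos inner_ge0.
set t := inner x y / inner y y.
have ht : t * inner y y = inner x y by rewrite /t mulfVK.
have := inner_ge0 (x - t *: y); rewrite inner_sqB => h.
have := mulr_ge0 (ltW Ypos) h.
have -> : inner y y * (inner x x - 2 * t * inner x y + t ^+ 2 * inner y y)
  = inner y y * inner x x - 2 * (t * inner y y) * inner x y
    + (t * inner y y) * (t * inner y y) by ring.
rewrite ht; nra.
Qed.

End InnerLemmas.
Section BlockLemmas.
Variables (R : realType) (H0 E : hilbertType R).

Lemma block_repr thl thh rhohat deltahat (G : H0 -> E) (d : opdata E)
  zk wk rho x y :
  admissible d ->
  ps_block thl thh rhohat deltahat G d zk wk rho x y ->
  exists a, oA d x a /\ forall t, inner t y =
    inner t a + inner t (oB d x) + inner t (oC d (G zk)) + inner t (oD d x).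
Proof.
move=> [_ _ _ _ [_ hD0]] [hi [hii hiii]].
case: (pselect (inT d (G zk) wk)) => hT.
  have [_ -> ->] := hi hT.
  exists (wk - oB d (G zk) - oC d (G zk) - oD d (G zk)); split => // t.
  rewrite !innerBr; ring.
case hD: (oinD d).
  have [rp hres _ ->] := hii hT hD.
  move: hres => [s' [[a [ha ->]] hs]].
  exists a; split => // t.
  set L := Dlin d (G zk) x in hs *; clearbody L.
  have h := congr1 (inner t) hs.
  rewrite innerZr !(innerDr, innerNr, innerZr) in h.
  rewrite !(innerDr, innerNr, innerZr).
  have rp0 : rho != 0 by rewrite gt_eqF.
  have ha' : inner t a = rho^-1 * (rho * (inner t a + inner t L))
     - inner t L.
    by rewrite mulrA mulVf // mul1r; ring.
  by rewrite ha' -h; field.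
have [rp hres ->] := hiii hT (negbT hD).
move: hres => [a [ha hs]].
exists a; split => // t.
have h := congr1 (inner t) hs.
rewrite !(innerDr, innerNr, innerZr) in h.
rewrite !(innerDr, innerNr, innerZr) (hD0 (negbT hD)).2 inner0r.
have rp0 : rho != 0 by rewrite gt_eqF.
have ha' : inner t a = rho^-1 * (rho * inner t a) by rewrite mulrA mulVf // mul1r.
by rewrite ha' -h; field.
Qed.

Lemma block_ineq (d : opdata E) (u x y g w : E) :
  admissible d ->
  (exists a, oA d x a /\ forall t, inner t y =
    inner t a + inner t (oB d x) + inner t (oC d u) + inner t (oD d x)) ->
  inT d g w ->
  inner (g - x) (y - w) - inv4_beta (obeta d) * hnorm (x - u) ^+ 2 <= 0.
Proof.
move=> [[monA _] [monB _] [bpos coc] [monD _ _ _ _] _] [a [ha hy]] hg.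
set T := g - x.
have hA := monA _ _ _ _ ha hg.
have hB := monB x g.
have hD := monD x g.
have hN : forall v, inner (x - g) v = - inner T v.
  by move=> v; rewrite -opprB innerNl.
rewrite hN !innerBr in hA; rewrite hN innerBr in hB; rewrite hN innerBr in hD.
have hC : inner T (oC d u) - inner T (oC d g)
          <= inv4_beta (obeta d) * hnorm (x - u) ^+ 2.
  move: bpos coc; case: (obeta d) => [r| |] //= rpos coc.
    rewrite lte_fin in rpos.
    have hc := coc u g.
    set Cc := oC d u - oC d g in hc *.
    set X := u - x.
    have h0 := inner_ge0 (X - (2 * r) *: Cc).
    rewrite inner_sqB in h0.
    have eT : inner T Cc = inner X Cc - inner (u - g) Cc
      by rewrite /T /X !innerBl; ring.
    have eX : hnorm (x - u) ^+ 2 = inner X X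
      by rewrite hnorm_sq /X -opprB innerNl innerNr opprK.
    rewrite hnorm_sq in hc.
    rewrite -innerBr -/Cc eT eX.
    have r4 : 0 < 4 * r by rewrite mulr_gt0.
    rewrite -(ler_pM2l r4) mulrA mulfV ?gt_eqF // mul1r.
    nra.
  by rewrite (coc u g) subrr mul0r.
rewrite innerBr hy; lra.
Qed.

End BlockLemmas.
Unset Implicit Arguments.
Set Strict Implicit.
Section Phi.
Variables (R : realType) (n : nat) (H0 : hilbertType R)
  (Hs : 'I_n.-1 -> hilbertType R)
  (G : forall i, H0 -> Hs i) (Gs : forall i, Hs i -> H0)
  (d : forall i, opdata (Hs i)) (dn : opdata H0)
  (x y : nat -> forall i, Hs i) (xn yn : nat -> H0) (z : nat -> H0).
Hypothesis hadj : forall i, is_adjoint (G i) (Gs i).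

Lemma phi_b k (p : prodH H0 Hs) :
  ps_phi G Gs d dn x y xn yn z k p =
       \sum_(i < n.-1) (inner (G i p.1 - x k i) (y k i - p.2 i)
                        - inv4_beta (obeta (d i)) * hnorm (x k i - G i (z k)) ^+ 2)
       + (inner (p.1 - xn k) (yn k - wn_of Gs p)
          - inv4_beta (obeta dn) * hnorm (xn k - z k) ^+ 2).
Proof.
rewrite /ps_phi /ps_v /ps_u /wn_of.
set S1 := \sum_(i < n.-1) inner (G i p.1) (y k i).
set S2 := \sum_(i < n.-1) inner (p.2 i) (x k i).
set S3 := \sum_(i < n.-1) inner (xn k) (Gs i (p.2 i)).
set S4 := \sum_(i < n.-1) inner (x k i) (y k i).
set S5 := \sum_(i < n.-1) inv4_beta (obeta (d i)) * hnorm (x k i - G i (z k)) ^+ 2.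
set S6 := \sum_(i < n.-1) inner (G i p.1) (p.2 i).
have e1 : \sum_(i < n.-1) inner (p.2 i) (x k i - G i (xn k)) = S2 - S3.
  rewrite /S2 /S3 -sumrB; apply: eq_bigr => i _.
  by rewrite innerBr [inner (p.2 i) (G i _)]innerC hadj.
have e2 : \sum_(i < n.-1) (inner (x k i) (y k i)
     + inv4_beta (obeta (d i)) * hnorm (x k i - G i (z k)) ^+ 2) = S4 + S5.
  by rewrite big_split.
have e3 : \sum_(i < n.-1) (inner (G i p.1 - x k i) (y k i - p.2 i)
     - inv4_beta (obeta (d i)) * hnorm (x k i - G i (z k)) ^+ 2)
     = S1 - S6 - S4 + S2 - S5.
  rewrite /S1 /S2 /S4 /S5 /S6 -sumrB -sumrB -big_split -sumrB /=.
  apply: eq_bigr => i _.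
  rewrite !(innerBl, innerBr) [inner (x k i) (p.2 i)]innerC; ring.
have e4 : inner p.1 (\sum_(i < n.-1) Gs i (y k i)) = S1.
  rewrite inner_sumr; apply: eq_bigr => i _; by rewrite hadj.
have e5 : inner (p.1 - xn k) (yn k - - \sum_(i < n.-1) Gs i (p.2 i))
    = inner p.1 (yn k) - inner (xn k) (yn k) + S6 - S3.
  rewrite opprK innerBl !innerDr !inner_sumr.
  have -> : \sum_(i < n.-1) inner p.1 (Gs i (p.2 i)) = S6.
    by apply: eq_bigr => i _; rewrite hadj.
  rewrite /S3; ring.
rewrite innerDr e4 e1 e2 e3 e5; ring.
Qed.

Lemma phi_diff k (p q : prodH H0 Hs) :
  ps_phi G Gs d dn x y xn yn z k p - ps_phi G Gs d dn x y xn yn z k q =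
  inner (p.1 - q.1) (ps_v Gs y yn k)
  + \sum_(i < n.-1) inner (p.2 i - q.2 i) (ps_u G x xn k i).
Proof.
rewrite /ps_phi innerBl.
have -> : \sum_(i < n.-1) inner (p.2 i - q.2 i) (ps_u G x xn k i) =
  \sum_(i < n.-1) inner (p.2 i) (ps_u G x xn k i)
  - \sum_(i < n.-1) inner (q.2 i) (ps_u G x xn k i).
  by rewrite -sumrB; apply: eq_bigr => i _; rewrite innerBl.
ring.
Qed.

End Phi.

Section Bnd.
Variable (R : realType).

Lemma adj_bound (E F : hilbertType R) (L : E -> F) (Ls : F -> E) :
  is_bounded_linear L -> is_adjoint L Ls ->
  exists c, 0 <= c /\ forall v, inner (Ls v) (Ls v) <= c * inner v v.
Proof.
move=> [_ [c hc]] hadj; exists (c ^+ 2); split; first exact: sqr_ge0.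
move=> v; set N := inner (Ls v) (Ls v).
have eN : N = inner (L (Ls v)) v by rewrite hadj.
have hcs := CS (L (Ls v)) v; rewrite -eN in hcs.
have hL : inner (L (Ls v)) (L (Ls v)) <= c ^+ 2 * N.
  rewrite -hnorm_sq /N -hnorm_sq.
  have := hc (Ls v); have := hnorm_ge0 (L (Ls v)); have := hnorm_ge0 (Ls v); nra.
have hY := inner_ge0 v; have hN : 0 <= N by exact: inner_ge0.
have [N0|Npos] := eqVneq N 0.
  by rewrite N0; apply: mulr_ge0 => //; exact: sqr_ge0.
have Np : 0 < N by rewrite lt0r Npos hN.
have h2 : N * N <= N * (c ^+ 2 * inner v v).
  have := ler_wpM2r hY hL; rewrite -expr2; nra.
by rewrite -(ler_pM2l Np).
Qed.

Lemma bnd_sum (V : preHilbertType R) (I : Type) (r : seq I) (P : pred I)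
  (f : I -> nat -> V) :
  (forall i, exists M, forall k, inner (f i k) (f i k) <= M) ->
  exists M, forall k, inner (\sum_(i <- r | P i) f i k) (\sum_(i <- r | P i) f i k) <= M.
Proof.
move=> hf; elim: r => [|a r [M hM]].
  by exists 0 => k; rewrite big_nil inner0l.
case hPa: (P a).
  have [Ma hMa] := hf a; exists (2 * Ma + 2 * M) => k.
  rewrite big_cons hPa; apply: le_trans (inner_sqD _ _) _.
  by apply: lerD; rewrite ler_pM2l // ?hMa ?hM.
by exists M => k; rewrite big_cons hPa.
Qed.

End Bnd.

Theorem proposition4p2 (R : realType) (n : nat) (H0 : hilbertType R)
  (Hs : 'I_n.-1 -> hilbertType R)
  (G : forall i : 'I_n.-1, H0 -> Hs i) (Gs : forall i : 'I_n.-1, Hs i -> H0)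
  (d : forall i : 'I_n.-1, opdata (Hs i)) (dn : opdata H0)
  (taul tauh thl thh rhohat deltahat gamma : R)
  (z : nat -> H0) (w : nat -> forall i : 'I_n.-1, Hs i)
  (rho : nat -> 'I_n.-1 -> R) (rhon : nat -> R)
  (x y : nat -> forall i : 'I_n.-1, Hs i) (xn yn : nat -> H0)
  (tau : nat -> R) :
  (2 <= n)%N ->
  (* (A1): G_i bounded linear with adjoint G_i^*; G_n = I *)
  (forall i, is_bounded_linear (G i)) ->
  (forall i, is_adjoint (G i) (Gs i)) ->
  (* (A2)-(A5), (A7) *)
  (forall i, admissible (d i)) -> admissible dn ->
  (* (A6) *)
  (exists (z0 : H0) (ws : forall i : 'I_n.-1, Hs i) (wN : H0),
     [/\ forall i, inT (d i) (G i z0) (ws i), inT dn z0 wN &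
         \sum_(i < n.-1) Gs i (ws i) + wN = 0]) ->
  (* parameters of Algorithm PS *)
  0 < taul -> taul < tauh -> tauh < 2 ->
  0 < thl -> thl < thh -> thh < 2 ->
  0 < rhohat -> 0 < deltahat -> 0 < gamma ->
  ps_iterates G Gs d dn taul tauh thl thh rhohat deltahat gamma
    z w rho rhon x y xn yn tau ->
  let phi := ps_phi G Gs d dn x y xn yn z in
  let grad := ps_grad G Gs x y xn yn gamma in
  let pk := fun k : nat => ((z k, w k) : prodH H0 Hs) in
  (* (a) *)
  (forall k, [/\ affine_fun (phi k), is_gradient gamma (phi k) (grad k) &
                 pnorm gamma (grad k) ^+ 2 = ps_pi G Gs x y xn yn gamma k]) /\
  (* (b) *)
  (forall k (p : prodH H0 Hs),
     phi k p =
       \sum_(i < n.-1) (inner (G i p.1 - x k i) (y k i - p.2 i)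
                        - inv4_beta (obeta (d i)) * hnorm (x k i - G i (z k)) ^+ 2)
       + (inner (p.1 - xn k) (yn k - wn_of Gs p)
          - inv4_beta (obeta dn) * hnorm (xn k - z k) ^+ 2)) /\
  (* (c) *)
  (forall k (p : prodH H0 Hs), extsol G Gs d dn p -> phi k p <= 0) /\
  (* (d) *)
  (forall k,
     (0 < phi k (pk k) ->
        pk k.+1 = psub (pk k)
          (pscale (tau k * phi k (pk k) / pnorm gamma (grad k) ^+ 2) (grad k))) /\
     (~ 0 < phi k (pk k) -> pk k.+1 = pk k)) /\
  (* (e) *)
  [/\ exists M : R, forall k, hnorm (z k) <= M,
      forall i, exists M : R, forall k, hnorm (w k i) <= M &
      exists M : R, forall k, hnorm (wn_of Gs (pk k)) <= M].
Proof.
move=> hn hGb hadj hd hdn [z0 [ws [wN [hs0 hsn hsum]]]] htl htlh htauh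
  hthl hthlh hthh hrho hdel hgam hit phi grad pk.
have hgam0 : gamma != 0 by rewrite gt_eqF.
have hb := @phi_b R n H0 Hs G Gs d dn x y xn yn z hadj.
have hc : forall k (p : prodH H0 Hs), extsol G Gs d dn p -> phi k p <= 0.
  move=> k p [hp hpn]; rewrite /phi hb.
  have [hbl [hbn _]] := hit k.
  have h1 : forall i, inner (G i p.1 - x k i) (y k i - p.2 i)
     - inv4_beta (obeta (d i)) * hnorm (x k i - G i (z k)) ^+ 2 <= 0.
    by move=> i; apply: (block_ineq (hd i) (block_repr (hd i) (hbl i)) (hp i)).
  have h2 := block_ineq hdn (block_repr hdn hbn) hpn.
  have h3 : \sum_(i < n.-1) (inner (G i p.1 - x k i) (y k i - p.2 i)
     - inv4_beta (obeta (d i)) * hnorm (x k i - G i (z k)) ^+ 2) <= 0.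
    by apply: sumr_le0 => i _; exact: h1.
  rewrite /= in h2; lra.
have hipg : forall k, 0 <= ipg gamma (grad k) (grad k).
  move=> k; apply: addr_ge0; first by apply: mulr_ge0; [exact: ltW|exact: inner_ge0].
  by apply: sumr_ge0 => i _; exact: inner_ge0.
have hnorm_pi : forall k, pnorm gamma (grad k) ^+ 2 = ps_pi G Gs x y xn yn gamma k.
  move=> k; rewrite /pnorm sqr_sqrtr // /ipg /grad /ps_grad /ps_pi /=.
  rewrite innerZl innerZr hnorm_sq mulrA mulrA mulfV // mul1r.
  by congr (_ + _); apply: eq_bigr => i _; rewrite hnorm_sq.
have ha : forall k, [/\ affine_fun (phi k), is_gradient gamma (phi k) (grad k) &
                 pnorm gamma (grad k) ^+ 2 = ps_pi G Gs x y xn yn gamma k].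
  move=> k; split => //.
    move=> t p q; rewrite /phi /ps_phi /padd /pscale /=.
    rewrite innerDl !innerZl.
    have -> : \sum_(i < n.-1) inner (t *: p.2 i + (1 - t) *: q.2 i) (ps_u G x xn k i)
      = t * \sum_(i < n.-1) inner (p.2 i) (ps_u G x xn k i)
        + (1 - t) * \sum_(i < n.-1) inner (q.2 i) (ps_u G x xn k i).
      rewrite !mulr_sumr -big_split /=; apply: eq_bigr => i _.
      by rewrite innerDl !innerZl.
    ring.
  move=> p e he; exists 1; split => // h _.
  have -> : phi k (padd p h) - phi k p = ipg gamma (grad k) h.
    rewrite /phi phi_diff /ipg /grad /ps_grad /padd /=.
    rewrite innerZl mulrA mulfV // mul1r addrAC subrr add0r innerC.
    congr (_ + _); apply: eq_bigr => i _.
    by rewrite addrAC subrr add0r innerC.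
  rewrite subrr normr0; apply: mulr_ge0; [exact: ltW|exact: sqrtr_ge0].
split; first exact: ha.
split; first exact: hb.
split; first exact: hc.
have hd' : forall k,
     (0 < phi k (pk k) ->
        pk k.+1 = psub (pk k)
          (pscale (tau k * phi k (pk k) / pnorm gamma (grad k) ^+ 2) (grad k))) /\
     (~ 0 < phi k (pk k) -> pk k.+1 = pk k).
  move=> k; have [_ [_ H3]] := hit k; move: H3; cbv zeta; case=> hpos hneg.
  split => hphi.
    have [_ hz hw] := hpos hphi.
    rewrite /pk /psub /pscale /grad /ps_grad /= hnorm_pi hz.
    congr pair; first by rewrite scalerA [_ * gamma^-1]mulrC.
    by apply: functional_extensionality_dep => i; rewrite hw.
  have [hz hw] := hneg hphi.
  rewrite /pk hz; congr pair.
  by apply: functional_extensionality_dep => i; rewrite hw.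
split; first exact: hd'.
have hwN : wN = - \sum_(i < n.-1) Gs i (ws i).
  by apply/eqP; rewrite -addr_eq0 addrC hsum.
set ps : prodH H0 Hs := (z0, ws).
have hps : forall k, phi k ps <= 0.
  by move=> k; apply: hc; split => //; rewrite /wn_of /= -hwN.
set Dk := fun k => gamma * inner (z k - z0) (z k - z0)
   + \sum_(i < n.-1) inner (w k i - ws i) (w k i - ws i).
have hstep : forall k, Dk k.+1 <= Dk k.
  move=> k; have [_ [_ H3]] := hit k; move: H3; cbv zeta; case=> hpos hneg.
  case: (pselect (0 < phi k (pk k))) => hphi; last first.
    have [hz hw] := hneg hphi.
    rewrite /Dk hz; under eq_bigr do rewrite hw; exact: le_refl.
  have [/andP [htk1 htk2] hz hw] := hpos hphi.
  have hdf := @phi_diff R n H0 Hs G Gs d dn x y xn yn z k (pk k) ps.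
  have hpsk := hps k.
  rewrite -/(phi k (pk k)) -/(phi k ps) in hdf.
  move: hz hw hpos hneg hdf hpsk hphi.
  rewrite -/(phi k (pk k)).
  set ph := phi k (pk k).
  set php := phi k ps.
  set v := ps_v Gs y yn k.
  set u := ps_u G x xn k.
  set pi := ps_pi G Gs x y xn yn gamma k.
  set al := tau k * ph / pi.
  move=> hz hw _ _ hdf hpsk hphi.
  have hpi0 : 0 <= pi.
    by rewrite /pi /ps_pi; apply: addr_ge0; [apply: mulr_ge0; [rewrite invr_ge0 ltW|exact: sqr_ge0]|apply: sumr_ge0 => i _; exact: sqr_ge0].
  have hal0 : 0 <= al.
    by rewrite /al; apply: divr_ge0 => //; apply: mulr_ge0; rewrite ltW // (lt_le_trans htl htk1).
  have hapi : al * al * pi = al * (tau k * ph).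
    have [pi0|pi0] := eqVneq pi 0.
      have al0 : al = 0 by rewrite /al pi0 invr0 mulr0.
      by rewrite al0 !mul0r.
    by rewrite /al -mulrA mulfVK.
  have e : Dk k.+1 = Dk k - 2 * al * (ph - php) + al * al * pi.
    rewrite hdf /Dk hz.
    have -> : z k - gamma^-1 * al *: v - z0 = (z k - z0) - (gamma^-1 * al) *: v
      by rewrite addrAC.
    rewrite inner_sqB.
    have -> : \sum_(i < n.-1) inner (w k.+1 i - ws i) (w k.+1 i - ws i)
      = \sum_(i < n.-1) inner (w k i - ws i) (w k i - ws i)
        - 2 * al * \sum_(i < n.-1) inner (w k i - ws i) (u i)
        + al ^+ 2 * \sum_(i < n.-1) inner (u i) (u i).
      rewrite !mulr_sumr -sumrB -big_split /=; apply: eq_bigr => i _.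
      by rewrite hw addrAC inner_sqB.
    have -> : pi = gamma^-1 * inner v v + \sum_(i < n.-1) inner (u i) (u i).
      rewrite /pi /ps_pi hnorm_sq; congr (_ + _).
      by apply: eq_bigr => i _; rewrite hnorm_sq.
    by field.
  have h1 : 0 <= al * (- php) by apply: mulr_ge0; lra.
  have h2 : 0 <= al * ph * (2 - tau k)
    by apply: mulr_ge0; [apply: mulr_ge0; lra|lra].
  rewrite e; nra.
have hD0 : forall k, Dk k <= Dk 0%N.
  by elim=> [|k IH]; [exact: le_refl|exact: le_trans (hstep k) IH].
have hsw : forall k, 0 <= \sum_(i < n.-1) inner (w k i - ws i) (w k i - ws i).
  by move=> k; apply: sumr_ge0 => i _; exact: inner_ge0.
have hzb : forall k, inner (z k - z0) (z k - z0) <= Dk 0%N / gamma.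
  move=> k; rewrite ler_pdivlMr // mulrC.
  have := hD0 k; have := hsw k; rewrite /Dk; lra.
have hwb : forall i k, inner (w k i - ws i) (w k i - ws i) <= Dk 0%N.
  move=> i k; apply: le_trans (hD0 k).
  have hg : 0 <= gamma * inner (z k - z0) (z k - z0)
    by apply: mulr_ge0; [exact: ltW|exact: inner_ge0].
  rewrite /Dk (bigD1 i) //=.
  have := sumr_ge0 (index_enum 'I_n.-1) (P := fun j => j != i)
     (F := fun j => inner (w k j - ws j) (w k j - ws j)) (fun j _ => inner_ge0 _).
  lra.
have hwib : forall i k, inner (w k i) (w k i) <= 2 * Dk 0%N + 2 * inner (ws i) (ws i).
  move=> i k; apply: le_trans (inner_sq_split _ (ws i)) _.
  have := hwb i k; lra.
split.
- exists (1 + (2 * (Dk 0%N / gamma) + 2 * inner z0 z0)) => k.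
  apply: le_trans (hnorm_le _) _; rewrite lerD2l.
  apply: le_trans (inner_sq_split _ z0) _.
  have := hzb k; lra.
- move=> i; exists (1 + (2 * Dk 0%N + 2 * inner (ws i) (ws i))) => k.
  apply: le_trans (hnorm_le _) _; rewrite lerD2l; exact: hwib.
- have hbi : forall i, exists M, forall k, inner (Gs i (w k i)) (Gs i (w k i)) <= M.
    move=> i; have [c [hc0 hcb]] := @adj_bound R H0 (Hs i) (G i) (Gs i) (hGb i) (hadj i).
    exists (c * (2 * Dk 0%N + 2 * inner (ws i) (ws i))) => k.
    apply: le_trans (hcb _) _; rewrite ler_wpM2l //; exact: hwib.
  have [M hM] := @bnd_sum R H0 'I_n.-1 (index_enum 'I_n.-1) xpredT
    (fun i k => Gs i (w k i)) hbi.
  exists (1 + M) => k.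
  apply: le_trans (hnorm_le _) _; rewrite lerD2l.
  by rewrite /wn_of /pk /= innerNl innerNr opprK; exact: hM.
Qed.
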